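(* Assume there exists $\theta>0$ with $\psi(\theta)=\log E\exp(\theta X_1)<\infty$. Fix $\epsilon\in(0,\mu)$ and, for the $s$-th system, let $$\kappa(A)=\inf\{k\ge1:\ |A_{n+1}|\ge n(\mu-\epsilon)/s\ \text{for all } n\ge k\}.$$ Then $E\kappa(A)=O(s)$ as $s\to\infty$.
   Context: Let $(X_n)_{n\ge1}$ be i.i.d. strictly positive interarrival times with mean $\mu\in(0,\infty)$. For $s\in\{1,2,\dots\}$, the arrival epochs of the $s$-th system form a time-stationary renewal process on $\mathbb R$ with interarrival times distributed as $X_1/s$; the epochs in $(-\infty,0]$, counted backwards from $0$, are $0\ge A_1>A_2>\cdots$ with $A_n-A_{n+1}=X_n/s$, where $|A_1|$ has the stationary-excess distribution of $X_1/s$ and is independent of $(X_n)$. $\inf\emptyset=\infty$. *)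

(* Defs.v *)
From HB Require Import structures.
From mathcomp Require Import all_boot all_order all_algebra.
From mathcomp Require Import all_classical all_reals all_analysis.
Set Implicit Arguments.
Unset Strict Implicit.
Unset Printing Implicit Defensive.
Import Order.TTheory GRing.Theory Num.Theory.
Import numFieldNormedType.Exports.
Local Open Scope classical_set_scope.
Local Open Scope ring_scope.

Section Defs.
Context {d : measure_display} {T : measurableType d} {R : realType}.
Variable P : probability T R.

Definition mutually_independent (Y : nat -> T -> R) : Prop :=
  forall (J : seq nat), uniq J ->
  forall B : nat -> set R, (forall j, measurable (B j)) ->
  P (\bigcap_(j in [set j | j \in J]) (Y j @^-1` B j)) =
    (\prod_(j <- J) P (Y j @^-1` B j))%E.

(* Z has the stationary-excess (equilibrium) distribution of the
   nonnegative random variable Y whose mean is m: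
   P(Z <= x) = (1/m) \int_0^x P(Y > u) du  for every real x
   (for x < 0 the interval is empty, so Z >= 0 a.s.). *)
Definition stationary_excess (Z Y : T -> R) (m : R) : Prop :=
  forall x : R,
    P [set t | Z t <= x] =
      ((m^-1)%:E * \int[@lebesgue_measure R]_(u in `[0%R, x]) P [set t | (u < Y t)%R])%E.

End Defs.

Section Renewal.
Context {T : Type} {R : realType}.

(* X k = X_{k+1} (interarrival times, 0-indexed); A1 = A_1 (nonpositive).
   epoch X A1 s n = A_n for n >= 1:  A_{n+1} = A_1 - (X_1+...+X_n)/s. *)
Definition epoch (X : nat -> T -> R) (A1 : T -> R) (s : nat) (n : nat) (t : T) : R :=
  A1 t - (\sum_(i < n.-1) X i t) / s%:R.

Definition kappa (X : nat -> T -> R) (A1 : T -> R) (mu eps : R) (s : nat) (t : T)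
  : \bar R :=
  ereal_inf [set (k%:R)%:E | k in
    [set k : nat | (1 <= k)%N /\
       forall n : nat, (k <= n)%N ->
         n%:R * (mu - eps) / s%:R <= `|epoch X A1 s n.+1 t| ]].

End Renewal.

(* Main.v *)
Require Import Defs.
From HB Require Import structures.
From mathcomp Require Import all_boot all_order all_algebra.
From mathcomp Require Import all_classical all_reals all_analysis.
From mathcomp Require Import measurable_realfun.
From mathcomp Require Import ring lra.
Import Order.TTheory GRing.Theory Num.Theory.
Import numFieldNormedType.Exports.
Local Open Scope classical_set_scope.
Local Open Scope ring_scope.
Import HBNNSimple.
Lemma binom_alg (R : realType) (p q : R) : 0 <= p <= 1 -> q < p ->
  exists r : R, 0 <= r < 1 /\ forall n : nat,
  \sum_(f : {ffun 'I_n -> bool} | (\sum_(i < n) nat_of_bool (f i))%:R < n%:R * q)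
     \prod_(i < n) (if f i then p else 1 - p) <= r ^+ n.
Proof.
move=> /andP[p0 p1] qp.
set l := (p - q) / 2.
have l0 : 0 < l by rewrite /l divr_gt0 // subr_gt0.
set e := expR (- l).
set rho := expR (- (l * q)).
have e0 : 0 < e by exact: expR_gt0.
have rho0 : 0 < rho by exact: expR_gt0.
have he : e * (1 + l) <= 1.
  rewrite /e expRN -[X in _ <= X](@mulVf _ (expR l)); last by rewrite gt_eqF // expR_gt0.
  by rewrite ler_pM2l ?invr_gt0 ?expR_gt0 // expR_ge1Dx.
have hrho : 1 - l * q <= rho by rewrite /rho -[X in X <= _]/(1 + - (l * q)) expR_ge1Dx.
exists ((1 - (1 - e) * p) / rho); split.
  apply/andP; split.
    apply: divr_ge0; last exact: ltW.
    have : e * p >= 0 by exact: mulr_ge0 (ltW e0) p0.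
    nra.
  rewrite ltr_pdivrMr // mul1r.
  apply: (lt_le_trans _ hrho).
  have h1 : e * p * (1 + l) <= p.
    by have := ler_wpM2r p0 he; rewrite mul1r mulrAC.
  have h2 : 0 < p - q - l * q.
    have -> : p - q - l * q = (p - q) * (1 - q / 2) by rewrite /l; field.
    apply: mulr_gt0; first by rewrite subr_gt0.
    lra.
  have h3 : 0 < l * (p - q - l * q) by exact: mulr_gt0.
  have h4 : 0 <= e * p by exact: mulr_ge0 (ltW e0) p0.
  nra.
move=> n.
apply: (@le_trans _ _ (\sum_(f : {ffun 'I_n -> bool})
   (\prod_(i < n) (if f i then e * p else 1 - p)) / rho ^+ n)).
  rewrite [X in _ <= X](bigID (fun f : {ffun 'I_n -> bool} =>
     (\sum_(i < n) nat_of_bool (f i))%:R < n%:R * q)) /=.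
  rewrite -[X in X <= _]addr0; apply: lerD; last first.
    apply: sumr_ge0 => f _; apply: divr_ge0; last by rewrite exprn_ge0 // ltW.
    by apply: prodr_ge0 => i _; case: (f i) => //; [exact: mulr_ge0 (ltW e0) p0 | lra].
  apply: ler_sum => f hf.
  have -> : \prod_(i < n) (if f i then e * p else 1 - p) =
     e ^+ (\sum_(i < n) nat_of_bool (f i)) * \prod_(i < n) (if f i then p else 1 - p).
    rewrite -prodrXr -big_split /=; apply: eq_bigr => i _.
    by case: (f i); rewrite ?expr1 ?expr0 ?mul1r.
  set k := (\sum_(i < n) nat_of_bool (f i)) in hf *.
  have hP : 0 <= \prod_(i < n) (if f i then p else 1 - p).
    by apply: prodr_ge0 => i _; case: (f i) => //; lra.
  have hk : rho ^+ n <= e ^+ k.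
    rewrite /rho /e -!expRM_natl ler_expR.
    have : k%:R * l <= n%:R * q * l by rewrite ler_pM2r // ltW.
    nra.
  rewrite mulrAC -[X in X <= _]mul1r; apply: ler_wpM2r => //.
  by rewrite ler_pdivlMr ?mul1r // exprn_gt0.
rewrite -mulr_suml -(bigA_distr_bigA (fun (i : 'I_n) (b : bool) => if b then e * p else 1 - p)) /= prodr_const card_ord.
rewrite expr_div_n ler_pM2r; last by rewrite invr_gt0 exprn_gt0.
rewrite big_bool /= le_eqVlt; apply/orP; left; apply/eqP; congr (_ ^+ _); ring.
Qed.


Definition phin n (f : {ffun 'I_n -> bool}) (j : nat) : bool :=
  if insub j is Some i then f i else false.
Arguments phin {n} f j.

Definition Ev {T : Type} {R : realType} (X : nat -> T -> R) (B : set R) n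
   (f : {ffun 'I_n -> bool}) : set T :=
  \bigcap_(j in [set j | j \in iota 0 n]) (X j @^-1` (if phin f j then B else ~` B)).

Definition Ubad {T : Type} {R : realType} (X : nat -> T -> R) (B : set R) (q : R) n : set T :=
  \big[setU/set0]_(f : {ffun 'I_n -> bool} |
       (\sum_(i < n) nat_of_bool (f i))%:R < n%:R * q) Ev X B n f.

Lemma fin_subadd d (T : measurableType d) (R : realType) (mu : {measure set T -> \bar R})
  (I : Type) (r : seq I) (Pr : pred I) (F : I -> set T) :
  (forall i, measurable (F i)) ->
  (mu (\big[setU/set0]_(i <- r | Pr i) F i) <= \sum_(i <- r | Pr i) mu (F i))%E.
Proof.
move=> mF; elim: r => [|i r IH]; first by rewrite !big_nil measure0.
rewrite !big_cons; case: (Pr i) => //.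
apply: (le_trans (measureU2 _ (mF i) _)); first exact: bigsetU_measurable.
exact: leeD.
Qed.

Lemma Ev_meas d (T : measurableType d) (R : realType) (P : probability T R)
  (X : nat -> {RV P >-> R}) (B : set R) (mB : measurable B) n f :
  measurable (Ev (fun k => X k : T -> R) B n f).
Proof.
apply: bigcap_measurableType => j _; apply: measurable_funPTI.
by case: phin => //; exact: measurableC.
Qed.

Lemma prob_Ev d (T : measurableType d) (R : realType) (P : probability T R)
  (X : nat -> {RV P >-> R}) (B : set R) (mB : measurable B) n f :
  (forall k, distribution P (X k) = distribution P (X 0%N)) ->
  mutually_independent P (fun k => X k : T -> R) ->
  P (Ev (fun k => X k : T -> R) B n f) =
  (\prod_(i < n) (if f i then fine (P (X 0%N @^-1` B)) else 1 - fine (P (X 0%N @^-1` B))))%:E.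
Proof.
move=> hid hind.
have mBC : forall b : bool, measurable (if b then B else ~` B).
  by case => //; exact: measurableC.
rewrite /Ev hind ?iota_uniq // -prodEFin.
have -> : iota 0 n = index_iota 0 n by rewrite /index_iota subn0.
rewrite big_mkord; apply: eq_bigr => i _.
have -> : P (X i @^-1` (if phin f i then B else ~` B)) =
          P (X 0%N @^-1` (if phin f i then B else ~` B)).
  by have := congr1 (fun m => m (if phin f i then B else ~` B)) (hid i).
have mB0 : measurable (X 0%N @^-1` B) by exact: measurable_funPTI.
rewrite /phin valK; case: (f i).
  by rewrite fineK // fin_num_measure.
by rewrite preimage_setC probability_setC // EFinB fineK // fin_num_measure.
Qed.

Lemma binom_prob d (T : measurableType d) (R : realType) (P : probability T R)
  (X : nat -> {RV P >-> R}) (B : set R) (mB : measurable B) (q : R) :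
  (forall k, distribution P (X k) = distribution P (X 0%N)) ->
  mutually_independent P (fun k => X k : T -> R) ->
  q < fine (P (X 0%N @^-1` B)) ->
  exists r : R, 0 <= r < 1 /\ forall n,
    (P (Ubad (fun k => X k : T -> R) B q n) <= (r ^+ n)%:E)%E.
Proof.
move=> hid hind hq.
set p := fine (P (X 0%N @^-1` B)) in hq.
have mB0 : measurable (X 0%N @^-1` B) by exact: measurable_funPTI.
have hp : 0 <= p <= 1.
  apply/andP; split; first exact: fine_ge0.
  rewrite -lee_fin /p fineK ?fin_num_measure //; exact: probability_le1.
have [r [hr hb]] := @binom_alg R p q hp hq.
exists r; split => // n.
rewrite /Ubad; apply: le_trans; first apply: fin_subadd.
  by move=> f; exact: Ev_meas.
rewrite (eq_bigr (fun f : {ffun 'I_n -> bool} =>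
   (\prod_(i < n) (if f i then p else 1 - p))%:E)); last first.
  by move=> f _; apply: prob_Ev.
by rewrite sumEFin lee_fin; exact: hb.
Qed.

Lemma simple_below d (T : measurableType d) (R : realType) (P : probability T R)
  (X0 : {RV P >-> R}) (mu a : R) :
  (forall t, 0 < X0 t) -> ('E_P[X0] = mu%:E)%E -> a < mu ->
  exists h : {nnsfun R >-> R}, (forall y, 0 <= y -> h y <= y) /\
    (a%:E < sintegral (distribution P X0) h)%E.
Proof.
move=> X0pos hE amu.
have mf : measurable_fun [set: R] (fun y : R => ((`|y|)%:E : \bar R)).
  by apply/measurable_EFinP; exact: normr_measurable.
have h0 : forall y : R, (0 <= (`|y|)%:E)%E by move=> y; rewrite lee_fin.
have hd := ge0_integral_distribution X0 mf h0.
have e1 : (\int[P]_x (`|X0 x|)%:E = mu%:E)%E.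
  by rewrite -hE expectation_def; apply: eq_integral => t _; rewrite gtr0_norm.
have hsup : (\int[distribution P X0]_y (`|y|)%:E = mu%:E)%E by rewrite hd -e1.
rewrite ge0_integralTE /= in hsup; last by move=> y; rewrite lee_fin.
have : (a%:E < ereal_sup [set sintegral (distribution P X0) h | h in
     [set h : {nnsfun R >-> R} | forall x, ((h x)%:E <= (`|x|)%:E)%E]])%E.
  by rewrite hsup lte_fin.
move=> /ereal_sup_gt [_ [h hh <-] ha].
exists h; split => // y y0.
by have := hh y; rewrite lee_fin ger0_norm.
Qed.

Lemma le_int_nm d (T : measurableType d) (R : realType) (mu : {measure set T -> \bar R})
  (f g : T -> \bar R) : (forall x, (0 <= f x)%E) -> (forall x, (f x <= g x)%E) ->
  (\int[mu]_x f x <= \int[mu]_x g x)%E.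
Proof.
move=> f0 fg.
have g0 : forall x, (0 <= g x)%E by move=> x; exact: le_trans (f0 x) (fg x).
rewrite !ge0_integralTE //=.
apply: ge_ereal_sup => _ [h hf <-]; apply: ereal_sup_ubound; exists h => //.
by move=> x; exact: le_trans (hf x) (fg x).
Qed.

Lemma geo_part (R : realType) (s : R) n : (\sum_(k < n) s ^+ k) * (1 - s) = 1 - s ^+ n.
Proof.
elim: n => [|n IH]; first by rewrite big_ord0 expr0 mul0r subrr.
by rewrite big_ord_recr /= mulrDl IH exprS; ring.
Qed.

Lemma nsn (R : realType) (s : R) n : 0 <= s < 1 -> n.+1%:R * s ^+ n * (1 - s) <= 1.
Proof.
move=> /andP[s0 s1].
have hs : 0 <= 1 - s by lra.
apply: (@le_trans _ _ ((\sum_(k < n.+1) s ^+ k) * (1 - s))).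
  apply: ler_wpM2r => //.
  have -> : n.+1%:R * s ^+ n = \sum_(k < n.+1) s ^+ n by rewrite sumr_const card_ord mulr_natl.
  apply: ler_sum => k _; apply: ler_wiXn2l => //; first exact: ltW.
  by rewrite -ltnS.
by rewrite geo_part lerBlDr lerDl exprn_ge0.
Qed.

Lemma series_bound (R : realType) (K r : R) : 0 <= K -> 0 <= r < 1 ->
  exists C : R, (\sum_(0 <= n <oo) ((n.+1)%:R * K * r ^+ n)%:E <= C%:E)%E.
Proof.
move=> K0 /andP[r0 r1].
set s := (1 + r) / 2.
have s0 : 0 <= s by rewrite /s; lra.
have s1 : s < 1 by rewrite /s; lra.
have rs : r <= s * s by rewrite /s; nra.
have hs : 0 < 1 - s by lra.
exists (K / (1 - s) / (1 - s)).
have hnd := @ereal_nondecreasing_series R (fun n => ((n.+1)%:R * K * r ^+ n)%:E) xpredT 0%N.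
have := hnd _; move=> /(_ _)/ereal_nondecreasing_cvgn/cvg_lim => -> //.
  apply: ge_ereal_sup => _ [N _ <-] /=.
  rewrite sumEFin lee_fin.
  apply: (@le_trans _ _ (\sum_(0 <= n < N) K / (1 - s) * s ^+ n)).
    apply: ler_sum => n _.
    have h1 : r ^+ n <= s ^+ n * s ^+ n by rewrite -exprMn; apply: lerXn2r => //; rewrite ?nnegrE //; nra.
    have h2 := @nsn R s n.
    have ss : 0 <= s < 1 by apply/andP.
    have {}h2 := h2 ss.
    have b0 : 0 <= n.+1%:R :> R by [].
    have a0 : 0 <= s ^+ n by exact: exprn_ge0.
    rewrite [X in _ <= X]mulrAC ler_pdivlMr //.
    apply: (@le_trans _ _ (n.+1%:R * K * (s ^+ n * s ^+ n) * (1 - s))).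
      apply: ler_wpM2r; first exact: ltW.
      by apply: ler_wpM2l => //; exact: mulr_ge0.
    have -> : n.+1%:R * K * (s ^+ n * s ^+ n) * (1 - s) = K * s ^+ n * (n.+1%:R * s ^+ n * (1 - s)) by ring.
    rewrite -[X in _ <= X]mulr1; apply: ler_wpM2l => //; exact: mulr_ge0.
  rewrite -mulr_sumr; apply: ler_wpM2l; first by apply: divr_ge0 => //; exact: ltW.
  rewrite -[X in _ <= X]mul1r ler_pdivlMr // big_mkord geo_part.
  by rewrite lerBlDr lerDl exprn_ge0.
by move=> n _ _; rewrite lee_fin; apply: mulr_ge0; [apply: mulr_ge0 | apply: exprn_ge0].
Qed.

Lemma bigsetU_in {T : Type} {I : eqType} (r : seq I) (Pr : pred I) (F : I -> set T) i x :
  i \in r -> Pr i -> F i x -> (\big[setU/set0]_(j <- r | Pr j) F j) x.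
Proof.
elim: r => [//|j r IH]; rewrite inE big_cons => /orP[/eqP <-|ir] Pi Fx.
  by rewrite Pi; left.
by case: (Pr j); [right|]; exact: IH.
Qed.

Lemma sum_seq_const (R : realType) (l : seq R) (c : R) : \sum_(v <- l) c = c *+ size l.
Proof. by elim: l => [|v l IH]; rewrite ?big_nil // big_cons IH mulrS. Qed.

Theorem mainTheorem12 (d : measure_display) (T : measurableType d) (R : realType)
  (P : probability T R)
  (X : nat -> {RV P >-> R})        (* X k = X_{k+1} *)
  (A1 : nat -> {RV P >-> R})       (* A1 s = A_1 of the s-th system *)
  (mu eps : R) :
  (* strictly positive interarrival times *)
  (forall k t, 0 < X k t) ->
  (* identically distributed *)
  (forall k, distribution P (X k) = distribution P (X 0%N)) ->
  (* independent *)
  mutually_independent P (fun k => X k : T -> R) ->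
  (* mean mu in (0, oo) *)
  0 < mu -> ('E_P[X 0%N] = mu%:E)%E ->
  (* finite exponential moment: psi(theta) < oo for some theta > 0 *)
  (exists theta : R, 0 < theta /\
     (\int[P]_t (expR (theta * X 0%N t))%:E < +oo)%E) ->
  (* stationary start of the s-th system *)
  (forall s : nat, (1 <= s)%N ->
     (forall t, A1 s t <= 0) /\
     stationary_excess P (fun t => - A1 s t) (fun t => X 0%N t / s%:R) (mu / s%:R) /\
     mutually_independent P
       (fun k => match k with 0%N => (A1 s : T -> R) | k'.+1 => (X k' : T -> R) end)) ->
  0 < eps -> eps < mu ->
  (* E kappa(A) = O(s) as s -> oo *)
  exists C : R, exists s0 : nat, forall s : nat, (s0 <= s)%N ->
    (\int[P]_t kappa (fun k => X k : T -> R) (A1 s) mu eps s t <= (C * s%:R)%:E)%E.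
Proof.
move=> Xpos hid hind mu0 hE _ hA eps0 epsmu.
set a := mu - eps.
have a0 : 0 < a by rewrite /a subr_gt0.
have amu : a < mu by rewrite /a ltrBlDr ltrDl.
have [h [hle ha]] := @simple_below d T R P (X 0%N) mu a (Xpos 0%N) hE amu.
have finh : finite_set (range h) by exact: fimfunP.
set vs := finmap.enum_fset (fset_set (range h)).
have vsuniq : uniq vs by exact: finmap.fset_uniq.
have invs : forall y, h y \in vs.
  move=> y; have := in_fset_set finh (h y).
  rewrite (_ : (h y \in range h) = true); last by apply/mem_set; exists y.
  by [].
have vs0 : forall v, v \in vs -> 0 <= v.
  move=> v; have := in_fset_set finh v.
  move=> e hv; have : v \in range h by rewrite -e.
  by move=> /set_mem [y _ <-]; exact: fun_ge0.
have mh : forall v, measurable (h @^-1` [set v]).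
  by move=> v; exact: measurable_funPTI.
set pv := fun v => fine (P (X 0%N @^-1` (h @^-1` [set v]))).
have hS : a < \sum_(v <- vs) v * pv v.
  rewrite -lte_fin -sumEFin.
  move: ha; rewrite sintegralE fsbig_finite //.
  rewrite (eq_bigr (fun v => (v * pv v)%:E)) // => v _.
  rewrite EFinM /pv fineK //; apply: fin_num_measure; exact: measurable_funPTI.
set S := \sum_(v <- vs) v * pv v in hS.
set Sv := \sum_(v <- vs) v.
have Sv0 : 0 <= Sv by rewrite /Sv big_seq; apply: sumr_ge0 => v /vs0.
set del := (S - a) / (1 + Sv).
have del0 : 0 < del by apply: divr_gt0; lra.
set qv := fun v => pv v - del.
have hq : a <= \sum_(v <- vs) v * qv v.
  have -> : \sum_(v <- vs) v * qv v = S - del * Sv.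
    rewrite /qv /S /Sv mulr_sumr -sumrB; apply: eq_bigr => v _; ring.
  have hd : del * (1 + Sv) = S - a by rewrite /del divfK //; apply: lt0r_neq0; lra.
  nra.
have qlt : forall v, qv v < pv v by move=> v; rewrite /qv ltrBlDr ltrDl.
have [r [hr hrb]] : exists r : R, 0 <= r < 1 /\ forall v, v \in vs -> forall n,
   (P (Ubad (fun k => X k : T -> R) (h @^-1` [set v]) (qv v) n) <= (r ^+ n)%:E)%E.
  suff : forall l : seq R, exists r : R, 0 <= r < 1 /\ forall v, v \in l -> forall n,
     (P (Ubad (fun k => X k : T -> R) (h @^-1` [set v]) (qv v) n) <= (r ^+ n)%:E)%E by [].
  elim => [|v l [r [hr hrb]]]; first by exists 0; split => //; rewrite lexx ltr01.
  have [r' [hr' hrb']] := @binom_prob d T R P X (h @^-1` [set v]) (mh v) (qv v) hid hind (qlt v).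
  move: hr hr' => /andP[r0 r1] /andP[r0' r1'].
  exists (Num.max r r'); split.
    by rewrite le_max r0 /= gt_max r1 r1'.
  move=> w; rewrite inE => /orP[/eqP ->|wl] n.
    apply: le_trans (hrb' n) _; rewrite lee_fin lerXn2r // ?nnegrE ?le_max ?lexx ?orbT //.
    by rewrite r0.
  apply: le_trans (hrb w wl n) _; rewrite lee_fin lerXn2r // ?nnegrE ?le_max ?lexx //.
  by rewrite r0.
set W := fun n : nat => if n == 0%N then [set: T] else
  \big[setU/set0]_(v <- vs) Ubad (fun k => X k : T -> R) (h @^-1` [set v]) (qv v) n.
have mU : forall v n, measurable (Ubad (fun k => X k : T -> R) (h @^-1` [set v]) (qv v) n).
  move=> v n; rewrite /Ubad; apply: bigsetU_measurable => f _; exact: Ev_meas.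
have mW : forall n, measurable (W n).
  by move=> [|n]; rewrite /W //=; apply: bigsetU_measurable => v _; exact: mU.
set K := (size vs)%:R + 1 : R.
have K0 : 0 <= K by rewrite /K addr_ge0.
have hW : forall n, (P (W n) <= (K * r ^+ n)%:E)%E.
  case => [|n]; rewrite /W /=.
    by rewrite probability_setT expr0 mulr1 lee_fin /K lerDr.
  apply: le_trans; first by apply: fin_subadd => v; exact: mU.
  apply: (@le_trans _ _ (\sum_(v <- vs) (r ^+ n.+1)%:E)%E).
    rewrite big_seq [X in (_ <= X)%E]big_seq; apply: lee_sum => v hv; exact: hrb.
  rewrite sumEFin sum_seq_const lee_fin /K mulrDl mul1r mulr_natl lerDl.
  by move: hr => /andP[r0 _]; exact: exprn_ge0.
pose u := fun (n : nat) (t : T) => (((n.+1)%:R : R) * (\1_(W n) t : R))%:E.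
pose G := fun t => (\sum_(n <oo) u n t)%E.
have mu_ : forall n, measurable_fun setT (u n).
  move=> n; apply/measurable_EFinP; apply: measurable_funM => //.
have u0 : forall n t, (0 <= u n t)%E.
  by move=> n t; rewrite lee_fin mulr_ge0.
have intG : (\int[P]_t G t = \sum_(n <oo) ((n.+1)%:R%:E * P (W n)))%E.
  rewrite /G integral_nneseries //; apply: eq_eseriesr => n _.
  rewrite /u (integralZl_indic _ (fun _ => W n)) ?integral_indic ?setIT //.
  by rewrite ltNge ler0n.
have [C hC] := @series_bound R K r K0 hr.
have intGC : (\int[P]_t G t <= C%:E)%E.
  rewrite intG; apply: le_trans hC.
  apply: lee_nneseries => [n _ _|n _].
    by apply: mule_ge0; rewrite ?lee_fin.
  rewrite -mulrA EFinM; apply: lee_pmul; rewrite ?lee_fin //.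
have hk : forall s, (1 <= s)%N -> forall t,
    (kappa (fun k => X k : T -> R) (A1 s) mu eps s t <= G t)%E.
  move=> s s1 t.
  have [hA1 _] := hA s s1.
  have G0 : (0 <= G t)%E by apply: nneseries_ge0 => n _ _; exact: u0.
  case hGt : (G t) => [g| |]; last 2 first.
      by rewrite leey.
    by rewrite hGt in G0.
  have hg : forall n, W n t -> n.+1%:R <= g.
    move=> n tW; rewrite -lee_fin -hGt /G.
    apply: le_trans (nneseries_lim_ge n.+1 _); last by move=> m _ _; exact: u0.
    rewrite big_nat_recr //= {2}/u indicE mem_set // mulr1.
    by apply: leeDr; apply: sume_ge0 => m _; exact: u0.
  have g1 : 1 <= g by have := hg 0%N I.
  set k := Num.truncn g.
  have k1 : (1 <= k)%N by rewrite /k truncn_ge_nat //; lra.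
  have hkg : g < k.+1%:R by have /andP[_ ->] := truncn_itv (ltW (lt_le_trans ltr01 g1)).
  apply: (@le_trans _ _ (k%:R)%:E); last first.
    by rewrite lee_fin; have /andP[-> _] := truncn_itv (ltW (lt_le_trans ltr01 g1)).
  apply: ereal_inf_lbound; exists k => //; split => // n kn.
  have n1 : (1 <= n)%N by exact: leq_trans k1 kn.
  have tW : ~ W n t.
    move=> tW; have := hg n tW.
    have : k.+1%:R <= n.+1%:R :> R by rewrite ler_nat ltnS.
    lra.
  have nU : forall v, v \in vs ->
      ~ Ubad (fun k => X k : T -> R) (h @^-1` [set v]) (qv v) n t.
    move=> v hv hU; apply: tW; rewrite /W ifF; last by apply/eqP => n0; rewrite n0 in n1.
    exact: (@bigsetU_in _ _ vs xpredT _ v t hv).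
  have cnt : forall v, v \in vs ->
      n%:R * qv v <= (\sum_(i < n) nat_of_bool (h (X i t) == v))%:R.
    move=> v hv; rewrite leNgt; apply/negP => hlt; apply: (nU v hv).
    apply: (@bigsetU_in _ _ _ _ _ [ffun i : 'I_n => h (X i t) == v] t (mem_index_enum _)).
      by under eq_bigr => i _ do rewrite ffunE.
    move=> j /= hj.
    have hjn : (j < n)%N by move: hj; rewrite mem_iota add0n.
    rewrite /phin; case: insubP => [i _ hi|/negP //].
    rewrite ffunE hi /=.
    by case: eqP => [e|ne]; [exact: e | exact: ne].
  have hsum : n%:R * a <= \sum_(i < n) X i t.
    apply: (@le_trans _ _ (\sum_(i < n) h (X i t))); last first.
      by apply: ler_sum => i _; apply: hle; exact: ltW (Xpos _ _).
    have -> : \sum_(i < n) h (X i t) =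
        \sum_(v <- vs) v * (\sum_(i < n) nat_of_bool (h (X i t) == v))%:R.
      rewrite (eq_bigr (fun i : 'I_n => \sum_(v <- vs) v * (nat_of_bool (h (X i t) == v))%:R)); last first.
        move=> i _; rewrite (bigD1_seq (h (X i t))) //= eqxx mulr1 big1 ?addr0 // => w hw.
        by rewrite eq_sym (negbTE hw) mulr0.
      rewrite exchange_big /=; apply: eq_bigr => v _.
      by rewrite natr_sum mulr_sumr.
    apply: (@le_trans _ _ (n%:R * \sum_(v <- vs) v * qv v)).
      by apply: ler_wpM2l => //.
    rewrite mulr_sumr big_seq [X in _ <= X]big_seq; apply: ler_sum => v hv.
    by rewrite mulrCA; apply: ler_wpM2l; [exact: vs0 | exact: cnt].
  rewrite /epoch /=.
  have s0 : 0 < s%:R :> R by rewrite ltr0n.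
  rewrite ler_normr; apply/orP; right.
  rewrite opprB.
  have : n%:R * a / s%:R <= (\sum_(i < n) X i t) / s%:R.
    by rewrite ler_pM2r ?invr_gt0.
  have := hA1 t.
  rewrite /a.
  lra.
exists (Num.max C 0), 1%N => s s1.
have kap0 : forall t, (0 <= kappa (fun k => X k : T -> R) (A1 s) mu eps s t)%E.
  move=> t; apply: le_ereal_inf_tmp => _ [k _ <-]; by rewrite lee_fin.
apply: le_trans (@le_int_nm d T R P _ G kap0 (hk s s1)) _.
apply: le_trans intGC _; rewrite lee_fin.
apply: (@le_trans _ _ (Num.max C 0)); first by rewrite le_max lexx.
rewrite ler_peMr ?le_max ?lexx ?orbT //.
by rewrite ler1n.
Qed.
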